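(* Let $A=[a_{ij}],B=[b_{ij}]\in\mathbb{R}_+^{m\times n}$ be a WN-pair such that $a_{ij}>0$ whenever $b_{ij}=0$. Then the pair $(A,B)$ is $S$-irreducible.
   Context: $[m]=\{1,\dots,m\}$. For $F\in\mathbb{R}^{m\times n}$, $R\subseteq[m]$, $K\subseteq[n]$, $F[R,K]$ is the submatrix with rows in $R$ and columns in $K$. A pair $A,B\in\mathbb{R}_+^{m\times n}$ is a WN-pair if $n\ge m$, $B$ has no zero row, and each column of $B$ has exactly one positive entry. A square nonnegative matrix is monomial if each row and each column has exactly one positive entry; it is irreducible if the digraph with an edge $i\to j$ iff the $(i,j)$ entry is positive is strongly connected. A WN-pair is $S$-irreducible if for every $K\subseteq[n]$ with $|K|=m$ such that $B[[m],K]$ is monomial, the matrix $B[[m],K]^{-1}A[[m],K]$ is irreducible. *)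

(* Defs.v *)
From HB Require Import structures.
From mathcomp Require Import all_boot all_order all_algebra.
Set Implicit Arguments. Unset Strict Implicit. Unset Printing Implicit Defensive.
Import Order.TTheory GRing.Theory Num.Theory.
Local Open Scope ring_scope.

Definition nonneg_mx (R : realFieldType) m n (A : 'M[R]_(m, n)) : Prop :=
  forall i j, 0 <= A i j.

Definition WN_pair (R : realFieldType) m n (A B : 'M[R]_(m, n)) : Prop :=
  [/\ (m <= n)%N, nonneg_mx A, nonneg_mx B,
      (forall i, exists j, B i j != 0) &
      (forall j, exists! i, 0 < B i j)].

Definition monomial_mx (R : realFieldType) m (M : 'M[R]_m) : Prop :=
  nonneg_mx M /\
  (forall i, exists! j, 0 < M i j) /\ (forall j, exists! i, 0 < M i j).

Definition irreducible_mx (R : realFieldType) m (M : 'M[R]_m) : Prop :=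
  forall i j : 'I_m, connect (fun k l => 0 < M k l) i j.

(* S-irreducible: for every m-subset K of columns (enumerated injectively by f,
   the order being irrelevant) with B[[m],K] monomial, B[[m],K]^-1 A[[m],K]
   is irreducible. *)
Definition S_irreducible (R : realFieldType) m n (A B : 'M[R]_(m, n)) : Prop :=
  forall f : 'I_m -> 'I_n, injective f ->
    monomial_mx (colsub f B) ->
    irreducible_mx (invmx (colsub f B) *m colsub f A).

(* Main.v *)
Require Import Defs.
From HB Require Import structures.
From mathcomp Require Import all_boot all_order all_algebra.
Import Order.TTheory GRing.Theory Num.Theory.
Local Open Scope ring_scope.

Lemma key (R : realFieldType) (m : nat) (M A : 'M[R]_m) :
  monomial_mx M -> (forall i j, M i j = 0 -> 0 < A i j) ->
  forall k j, k != j -> 0 < (invmx M *m A) k j.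
Proof.
move=> [nn [rowu colu]] hA.
have zero i j : ~~ (0 < M i j) -> M i j = 0.
  move=> h; apply/eqP; rewrite eq_le nn andbT; by rewrite leNgt.
pose N := \matrix_(k, i) (if 0 < M i k then (M i k)^-1 else 0).
have Nz k i0 : 0 < M i0 k -> forall i, i != i0 -> N k i = 0.
  move=> hp i ne; rewrite mxE; case: ifP => // hi.
  have [x [_ ux]] := colu k; by rewrite -(ux _ hi) (ux _ hp) eqxx in ne.
have NM : N *m M = 1%:M.
  apply/matrixP => k l; rewrite !mxE.
  have [i0 [hp ux]] := colu k.
  rewrite (bigD1 i0) //= big1 ?addr0; last first.
    by move=> i ne; rewrite (Nz k i0 hp i ne) mul0r.
  rewrite mxE hp.
  have [<-|nkl] := eqVneq k l; first rewrite mulVf ?gt_eqF //.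

  rewrite (zero i0 l) ?mulr0 //; apply/negP => hl.
  have [x [_ uy]] := rowu i0.
  by move/negP: nkl; apply; rewrite -(uy _ hp) (uy _ hl).
have [_ Mu] := mulmx1_unit NM.
have -> : invmx M = N by rewrite -(mulmxK Mu N) NM mul1mx.
move=> k j nkj; rewrite mxE.
have [i0 [hp ux]] := colu k.
rewrite (bigD1 i0) //= big1 ?addr0; last first.
  by move=> i ne; rewrite (Nz k i0 hp i ne) mul0r.
rewrite mxE hp mulr_gt0 ?invr_gt0 //; apply: hA; apply: zero; apply/negP => hl.
have [x [_ uy]] := rowu i0.
by move/negP: nkj; apply; rewrite -(uy _ hp) (uy _ hl).
Qed.

Theorem proposition6p4 (R : realFieldType) (m n : nat) (A B : 'M[R]_(m, n)) :
  WN_pair A B ->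
  (forall i j, B i j = 0 -> 0 < A i j) ->
  S_irreducible A B.
Proof.
move=> _ hAB f _ hmon i j.
case: (eqVneq i j) => [->|ne]; first exact: connect0.
apply: connect1; apply: key => // k l; rewrite !mxE; exact: hAB.
Qed.
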